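(* Let $\mathcal{A}$ be a complex Banach algebra with identity, let $\lambda$ be a nonzero complex number, and let $a, b \in \mathcal{A}^d$. If $$ab = \lambda\, a^\pi b a b^\pi,$$ then $a + b \in \mathcal{A}^d$ and $$\begin{aligned}(a + b)^d ={}& b^\pi a^d + b^d a^\pi + \sum_{n=0}^{\infty} (b^d)^{n+2} a (a + b)^n a^\pi + b^\pi \sum_{n=0}^{\infty} (a + b)^n b (a^d)^{n+2} \\ &- \sum_{n=0}^{\infty} \sum_{k=0}^{\infty} (b^d)^{k+1} a (a + b)^{n+k} b (a^d)^{n+2} - \sum_{n=0}^{\infty} (b^d)^{n+2} a (a + b)^n b a^d ,\end{aligned}$$ where all series converge.
   Context: For $x\in\mathcal{A}$, $\mathrm{comm}(x)=\{y\in\mathcal{A}: xy=yx\}$. $\mathcal{A}^{qnil}$ is the set of quasinilpotent elements of $\mathcal{A}$, i.e. those $x$ with $\lim_{n\to\infty}\|x^n\|^{1/n}=0$. An element $x\in\mathcal{A}$ has a generalized Drazin (g-Drazin) inverse if there is $y \in \mathrm{comm}(x)$ with $y = yxy$ and $x - x^2y \in \mathcal{A}^{qnil}$; such $y$ is unique and denoted $x^d$. $\mathcal{A}^d$ denotes the set of g-Drazin invertible elements. The spectral idempotent of $x\in\mathcal{A}^d$ is $x^\pi = 1 - xx^d$. *)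

(* Defs.v *)
From Stdlib Require Import Reals.
Open Scope R_scope.

Record Cplx := mkC { Re : R; Im : R }.
Definition C0 : Cplx := mkC 0 0.
Definition C1 : Cplx := mkC 1 0.
Definition Cadd (z w : Cplx) : Cplx := mkC (Re z + Re w) (Im z + Im w).
Definition Cmul (z w : Cplx) : Cplx :=
  mkC (Re z * Re w - Im z * Im w) (Re z * Im w + Im z * Re w).
Definition Cmod (z : Cplx) : R := sqrt (Re z ^ 2 + Im z ^ 2).

Record CBanachAlgebra := {
  carrier :> Type;
  bzero : carrier;
  bone : carrier;
  badd : carrier -> carrier -> carrier;
  bopp : carrier -> carrier;
  bmul : carrier -> carrier -> carrier;
  bscal : Cplx -> carrier -> carrier;
  bnorm : carrier -> R;
  badd_assoc : forall x y z, badd x (badd y z) = badd (badd x y) z;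
  badd_comm : forall x y, badd x y = badd y x;
  badd_0 : forall x, badd bzero x = x;
  badd_opp : forall x, badd x (bopp x) = bzero;
  bmul_assoc : forall x y z, bmul x (bmul y z) = bmul (bmul x y) z;
  bmul_1l : forall x, bmul bone x = x;
  bmul_1r : forall x, bmul x bone = x;
  bmul_addl : forall x y z, bmul (badd x y) z = badd (bmul x z) (bmul y z);
  bmul_addr : forall x y z, bmul x (badd y z) = badd (bmul x y) (bmul x z);
  bscal_1 : forall x, bscal C1 x = x;
  bscal_mul : forall s t x, bscal (Cmul s t) x = bscal s (bscal t x);
  bscal_addC : forall s t x, bscal (Cadd s t) x = badd (bscal s x) (bscal t x);
  bscal_add : forall s x y, bscal s (badd x y) = badd (bscal s x) (bscal s y);
  bscal_mull : forall s x y, bscal s (bmul x y) = bmul (bscal s x) y;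
  bscal_mulr : forall s x y, bscal s (bmul x y) = bmul x (bscal s y);
  bnorm_ge0 : forall x, 0 <= bnorm x;
  bnorm_eq0 : forall x, bnorm x = 0 -> x = bzero;
  bnorm_triangle : forall x y, bnorm (badd x y) <= bnorm x + bnorm y;
  bnorm_scal : forall s x, bnorm (bscal s x) = Cmod s * bnorm x;
  bnorm_mul : forall x y, bnorm (bmul x y) <= bnorm x * bnorm y;
  bcomplete : forall u : nat -> carrier,
    (forall eps, 0 < eps -> exists N, forall m n, (N <= m)%nat -> (N <= n)%nat ->
        bnorm (badd (u m) (bopp (u n))) < eps) ->
    exists l, forall eps, 0 < eps -> exists N, forall n, (N <= n)%nat ->
        bnorm (badd (u n) (bopp l)) < eps
}.

Arguments bzero {c}. Arguments bone {c}. Arguments badd {c}. Arguments bopp {c}.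
Arguments bmul {c}. Arguments bscal {c}. Arguments bnorm {c}.

Section Defs.
Variable A : CBanachAlgebra.

Definition bsub (x y : A) : A := badd x (bopp y).

Fixpoint bpow (x : A) (n : nat) : A :=
  match n with O => bone | S m => bmul x (bpow x m) end.

Definition bconv (u : nat -> A) (l : A) : Prop :=
  forall eps, 0 < eps -> exists N, forall n, (N <= n)%nat -> bnorm (bsub (u n) l) < eps.

Fixpoint bpartial (f : nat -> A) (n : nat) : A :=
  match n with O => f O | S m => badd (bpartial f m) (f (S m)) end.

Definition bseries (f : nat -> A) (S : A) : Prop := bconv (bpartial f) S.

Definition bcomm (x : A) : A -> Prop := fun y => bmul x y = bmul y x.

Definition nroot (n : nat) (t : R) : R :=
  match Rle_dec t 0 with left _ => 0 | right _ => Rpower t (/ INR n) end.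

Definition qnil (x : A) : Prop :=
  Un_cv (fun n => nroot n (bnorm (bpow x n))) 0.

Definition is_gdrazin (x y : A) : Prop :=
  bcomm x y /\ y = bmul y (bmul x y) /\ qnil (bsub x (bmul (bmul x x) y)).

Definition gdrazin_invertible (x : A) : Prop := exists y, is_gdrazin x y.

(* spectral idempotent x^pi = 1 - x x^d, given the g-Drazin inverse xd *)
Definition spi (x xd : A) : A := bsub bone (bmul x xd).

End Defs.

Arguments bsub {A}. Arguments bpow {A}. Arguments bconv {A}. Arguments bpartial {A}.
Arguments bseries {A}. Arguments bcomm {A}. Arguments qnil {A}.
Arguments is_gdrazin {A}. Arguments gdrazin_invertible {A}. Arguments spi {A}.

(* Main.v *)
Require Import Defs.
From Stdlib Require Import Reals.
From Stdlib Require Import Lia Lra List.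
From Stdlib Require Import Ncring Ncring_tac.
Open Scope R_scope.

#[global] Instance Aops (A : CBanachAlgebra) : @Ring_ops (carrier A) bzero bone badd bmul bsub bopp (@eq _) := {}.
#[global] Instance Aring (A : CBanachAlgebra) : Ring (Ro:=Aops A).
Proof.
  constructor; try exact eq_equivalence.
  all: cbv [Proper respectful equality eq_notation]; intros; subst; try reflexivity.
  - exact (badd_0 A _).
  - exact (badd_comm A _ _).
  - exact (badd_assoc A _ _ _).
  - exact (bmul_1l A _).
  - exact (bmul_1r A _).
  - exact (bmul_assoc A _ _ _).
  - exact (bmul_addl A _ _ _).
  - exact (bmul_addr A _ _ _).
  - exact (badd_opp A _).
Qed.


Section Gen.
Variable A : CBanachAlgebra.
Lemma scal0 (c : Cplx) : bscal c (@bzero A) = bzero.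
Proof.
  transitivity (bscal c (bmul (@bzero A) bzero)).
  - f_equal. non_commutative_ring.
  - rewrite (bscal_mull A). non_commutative_ring.
Qed.

Lemma Cmod0 : Cmod C0 = 0.
Proof. unfold Cmod, C0; cbn [Re Im]. replace (0^2+0^2) with 0 by ring. apply sqrt_0. Qed.

Lemma bnorm0 : bnorm (@bzero A) = 0.
Proof. rewrite <- (scal0 C0), (bnorm_scal A), Cmod0. ring. Qed.

Lemma bpow_succ_r (x : A) n : bpow x (S n) = bmul (bpow x n) x.
Proof.
  induction n; simpl in *.
  - non_commutative_ring.
  - transitivity (bmul x (bmul (bpow x n) x)); [f_equal; exact IHn | non_commutative_ring].
Qed.

Lemma bnorm_pow (x : A) n : bnorm (bpow x (S n)) <= bnorm x ^ (S n).
Proof.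
  induction n.
  - cbn [bpow]. rewrite (bmul_1r A). simpl. lra.
  - change (bpow x (S (S n))) with (bmul x (bpow x (S n))).
    eapply Rle_trans; [apply (bnorm_mul A)|].
    change (bnorm x ^ S (S n)) with (bnorm x * bnorm x ^ S n).
    apply Rmult_le_compat_l; [apply (bnorm_ge0 A)|exact IHn].
Qed.


Lemma INR_lt_pow2 n : INR n < 2 ^ n.
Proof.
  induction n.
  - simpl. lra.
  - rewrite S_INR. simpl.
    assert (1 <= 2 ^ n) by (apply pow_R1_Rle; lra). lra.
Qed.

Lemma exists_pow2 (K : R) : exists N, K < 2 ^ N.
Proof.
  destruct (INR_unbounded K) as [N HN]. exists N.
  pose proof (INR_lt_pow2 N). lra.
Qed.

Lemma Rpower_pos t e : 0 < Rpower t e.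
Proof. unfold Rpower. apply exp_pos. Qed.

Lemma Rpower_pow_inv (c : R) (n : nat) : 0 < c -> (1 <= n)%nat ->
  Rpower (c ^ n) (/ INR n) = c.
Proof.
  intros Hc Hn. rewrite <- Rpower_pow by exact Hc. rewrite Rpower_mult.
  rewrite Rinv_r. 2:{ apply not_0_INR. lia. }
  apply Rpower_1; exact Hc.
Qed.

Lemma pow_Rpower_inv (t : R) (n : nat) : 0 < t -> (1 <= n)%nat ->
  (Rpower t (/ INR n)) ^ n = t.
Proof.
  intros Ht Hn. rewrite <- Rpower_pow by apply Rpower_pos. rewrite Rpower_mult.
  rewrite Rinv_l. 2:{ apply not_0_INR. lia. }
  apply Rpower_1; exact Ht.
Qed.

Lemma qnil_bound (x : A) : qnil x -> forall e, 0 < e ->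
  exists K, 0 < K /\ forall n, bnorm (bpow x n) <= K * e ^ n.
Proof.
  intros Hq e He. destruct (Hq e He) as [N HN].
  assert (Hbig : forall n, (N <= n)%nat -> (1 <= n)%nat -> bnorm (bpow x n) <= e ^ n).
  { intros n H1 H2. specialize (HN n H1). unfold R_dist, nroot in HN.
    destruct (Rle_dec (bnorm (bpow x n)) 0) as [Hle|Hgt].
    - pose proof (pow_le e n (Rlt_le _ _ He)). lra.
    - apply Rnot_le_lt in Hgt.
      rewrite Rminus_0_r, Rabs_right in HN by (left; apply Rpower_pos).
      rewrite <- (pow_Rpower_inv (bnorm (bpow x n)) n Hgt H2).
      apply pow_incr. split; [left; apply Rpower_pos| lra]. }
  assert (Hfin : forall M, exists K, 0 < K /\ forall n, (n < M)%nat -> bnorm (bpow x n) <= K * e ^ n).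
  { induction M.
    - exists 1. split; [lra| intros; lia].
    - destruct IHM as [K [HK HKn]].
      assert (Hp : 0 < e ^ M) by (apply pow_lt; exact He).
      pose proof (bnorm_ge0 A (bpow x M)) as Hn0.
      exists (K + bnorm (bpow x M) / e ^ M). split.
      + assert (0 <= bnorm (bpow x M) / e ^ M) by (apply Rmult_le_pos; [exact Hn0| left; apply Rinv_0_lt_compat; exact Hp]). lra.
      + intros n Hn. destruct (Nat.eq_dec n M) as [->|Hne].
        * rewrite Rmult_plus_distr_r. unfold Rdiv. rewrite Rmult_assoc, Rinv_l by lra.
          assert (0 <= K * e ^ M) by (apply Rmult_le_pos; lra). lra.
        * assert (Hlt : (n < M)%nat) by lia. specialize (HKn n Hlt).
          assert (0 <= bnorm (bpow x M) / e ^ M * e ^ n).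
          { apply Rmult_le_pos; [apply Rmult_le_pos; [exact Hn0| left; apply Rinv_0_lt_compat; exact Hp]|apply pow_le; lra]. }
          rewrite Rmult_plus_distr_r. lra. }
  destruct (Hfin (S N)) as [K [HK HKn]].
  exists (K + 1). split; [lra|]. intros n.
  assert (0 < e ^ n) by (apply pow_lt; exact He).
  assert (0 <= K * e ^ n) by (apply Rmult_le_pos; lra).
  rewrite Rmult_plus_distr_r, Rmult_1_l.
  destruct (Nat.lt_ge_cases n (S N)) as [Hl|Hg].
  - specialize (HKn n Hl). lra.
  - specialize (Hbig n ltac:(lia) ltac:(lia)). lra.
Qed.

Lemma bound_qnil (x : A) :
  (forall e, 0 < e -> exists K, 0 < K /\ forall n, bnorm (bpow x n) <= K * e ^ n) -> qnil x.
Proof.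
  intros H eps Heps. destruct (H (eps / 4)) as [K [HK HKn]]; [lra|].
  destruct (exists_pow2 K) as [N HN].
  exists (S N). intros n Hn. unfold R_dist, nroot. rewrite Rminus_0_r.
  destruct (Rle_dec (bnorm (bpow x n)) 0) as [Hle|Hgt].
  - rewrite Rabs_R0. lra.
  - apply Rnot_le_lt in Hgt. rewrite Rabs_right by (left; apply Rpower_pos).
    assert (Hb : bnorm (bpow x n) <= (eps / 2) ^ n).
    { eapply Rle_trans; [apply HKn|].
      replace (eps / 2) with (2 * (eps / 4)) by field.
      rewrite Rpow_mult_distr. apply Rmult_le_compat_r; [apply pow_le; lra|].
      left. eapply Rlt_le_trans; [exact HN|]. apply Rle_pow; [lra|lia]. }
    eapply Rle_lt_trans.
    + apply Rle_Rpower_l; [left; apply Rinv_0_lt_compat, lt_0_INR; lia| split; [exact Hgt| exact Hb]].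
    + rewrite Rpower_pow_inv by (lra || lia). lra.
Qed.

Lemma kill (c B : R) (v x : A) : 0 < c -> 0 <= B -> qnil v ->
  (forall n, c ^ (S n) * bnorm x <= B ^ (S n) * bnorm (bpow v (S n)) * bnorm x) -> x = bzero.
Proof.
  intros Hc HB Hv H. apply (bnorm_eq0 A).
  set (e := c / (2 * (B + 1))).
  assert (He : 0 < e) by (unfold e; apply Rdiv_lt_0_compat; lra).
  destruct (qnil_bound v Hv e He) as [K [HK HKn]].
  destruct (exists_pow2 K) as [N HN].
  set (m := S N). specialize (H N). fold m in H. specialize (HKn m).
  pose proof (bnorm_ge0 A x) as Hx.
  assert (HBe : B * e <= c / 2).
  { unfold e. apply (Rmult_le_reg_r (2 * (B + 1))); [lra|].
    field_simplify; [|lra]. nra. }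
  assert (H1 : c ^ m * bnorm x <= K * (c / 2) ^ m * bnorm x).
  { eapply Rle_trans; [exact H|]. apply Rmult_le_compat_r; [exact Hx|].
    eapply Rle_trans. { apply Rmult_le_compat_l; [apply pow_le; lra| exact HKn]. }
    rewrite <- Rmult_assoc, (Rmult_comm (B ^ m) K), Rmult_assoc, <- Rpow_mult_distr.
    apply Rmult_le_compat_l; [lra|]. apply pow_incr. split; [apply Rmult_le_pos; lra| exact HBe]. }
  unfold Rdiv in H1. rewrite Rpow_mult_distr, pow_inv in H1.
  assert (Hcm : 0 < c ^ m) by (apply pow_lt; lra).
  assert (H2m : 2 ^ N < 2 ^ m) by (unfold m; simpl; assert (0 < 2 ^ N) by (apply pow_lt; lra); lra).
  assert (H2 : bnorm x <= K * / 2 ^ m * bnorm x).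
  { apply (Rmult_le_reg_l (c ^ m)); [exact Hcm|]. 
    replace (c ^ m * (K * / 2 ^ m * bnorm x)) with (K * (c ^ m * / 2 ^ m) * bnorm x) by ring. exact H1. }
  assert (Hk : K * / 2 ^ m < 1).
  { assert (0 < 2 ^ m) by (apply pow_lt; lra).
    apply (Rmult_lt_reg_r (2 ^ m)); [lra|]. rewrite Rmult_assoc, Rinv_l by lra. lra. }
  apply Rle_antisym; [|exact Hx]. nra.
Qed.

Fixpoint siter (c : Cplx) (n : nat) (x : A) : A :=
  match n with O => x | S m => bscal c (siter c m x) end.

Lemma siter_norm c n x : bnorm (siter c n x) = Cmod c ^ n * bnorm x.
Proof. induction n; simpl. ring. rewrite (bnorm_scal A), IHn. ring. Qed.

Lemma siter_mull c n x y : bmul (siter c n x) y = siter c n (bmul x y).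
Proof. induction n; simpl. reflexivity. rewrite <- (bscal_mull A), IHn. reflexivity. Qed.

Lemma siter_mulr c n x y : bmul x (siter c n y) = siter c n (bmul x y).
Proof. induction n; simpl. reflexivity. rewrite <- (bscal_mulr A), IHn. reflexivity. Qed.

Lemma siter_add c k i x : siter c k (siter c i x) = siter c (k + i) x.
Proof. induction k; simpl. reflexivity. rewrite IHk. reflexivity. Qed.

Lemma iter_eq c (w x v : A) : bscal c x = bmul (bmul w x) v ->
  forall n, siter c n x = bmul (bmul (bpow w n) x) (bpow v n).
Proof.
  intros H n. induction n.
  - simpl. non_commutative_ring.
  - simpl siter. rewrite IHn.
    rewrite (bscal_mull A), (bscal_mulr A), H.
    rewrite (bpow_succ_r w n). cbn [bpow]. non_commutative_ring.
Qed.

Lemma comm_pow (u v : A) mu : bmul u v = bscal mu (bmul v u) ->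
  forall i, bmul u (bpow v i) = siter mu i (bmul (bpow v i) u).
Proof.
  intros H i. induction i.
  - simpl. non_commutative_ring.
  - cbn [bpow siter].
    transitivity (bmul (bmul u v) (bpow v i)); [non_commutative_ring|].
    rewrite H, <- (bscal_mull A). f_equal.
    transitivity (bmul v (bmul u (bpow v i))); [non_commutative_ring|].
    rewrite IHi, siter_mulr. f_equal. non_commutative_ring.
Qed.

Fixpoint sumL {T : Type} (f : T -> A) (l : list T) : A :=
  match l with nil => bzero | t :: r => badd (f t) (sumL f r) end.

Lemma sumL_app {T} (f : T -> A) l1 l2 : sumL f (l1 ++ l2) = badd (sumL f l1) (sumL f l2).
Proof. induction l1; simpl. non_commutative_ring. rewrite IHl1. non_commutative_ring. Qed.

Lemma sumL_mull {T} (f : T -> A) (g : T -> T) (x : A) l :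
  (forall t, bmul x (f t) = f (g t)) -> bmul x (sumL f l) = sumL f (map g l).
Proof.
  intros H. induction l; simpl. non_commutative_ring.
  rewrite (bmul_addr A), H, IHl. reflexivity.
Qed.

Lemma sumL_norm {T} (f : T -> A) (M : R) l : 0 <= M ->
  (forall t, In t l -> bnorm (f t) <= M) -> bnorm (sumL f l) <= INR (length l) * M.
Proof.
  intros HM H. induction l; cbn [sumL length].
  - rewrite bnorm0. simpl. lra.
  - eapply Rle_trans; [apply (bnorm_triangle A)|].
    rewrite S_INR.
    assert (bnorm (f a) <= M) by (apply H; left; reflexivity).
    assert (bnorm (sumL f l) <= INR (length l) * M) by (apply IHl; intros; apply H; right; assumption).
    lra.
Qed.

Definition term (mu : Cplx) (u v : A) (t : nat * nat * nat) : A :=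
  let '(k, i, j) := t in siter mu k (bmul (bpow v i) (bpow u j)).

Lemma decomp (u v : A) mu : bmul u v = bscal mu (bmul v u) ->
  forall n, exists l, length l = (2 ^ n)%nat /\
    (forall t, In t l -> (snd (fst t) + snd t = n)%nat) /\
    bpow (badd u v) n = sumL (term mu u v) l.
Proof.
  intros Huv n. induction n.
  - exists ((0, 0, 0)%nat :: nil). split; [reflexivity|]. split.
    + intros t [<-|[]]. reflexivity.
    + simpl. non_commutative_ring.
  - destruct IHn as [l [Hlen [Hin Heq]]].
    exists (map (fun t => let '(k, i, j) := t in (k + i, i, S j)%nat) l ++
            map (fun t => let '(k, i, j) := t in (k, S i, j)) l).
    split; [|split].
    + rewrite length_app, !length_map, Hlen. simpl. lia.
    + intros t Ht. apply in_app_or in Ht as [Ht|Ht]; apply in_map_iff in Ht as [[[k i] j] [<- Ht']];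
      specialize (Hin _ Ht'); simpl in *; lia.
    + cbn [bpow]. rewrite Heq, (bmul_addl A), sumL_app. f_equal.
      * apply sumL_mull. intros [[k i] j]. simpl term.
        rewrite siter_mulr, <- siter_add. f_equal.
        transitivity (bmul (bmul u (bpow v i)) (bpow u j)); [non_commutative_ring|].
        rewrite (comm_pow u v mu Huv i), siter_mull. f_equal. cbn [bpow]. non_commutative_ring.
      * apply sumL_mull. intros [[k i] j]. simpl term.
        rewrite siter_mulr. f_equal. cbn [bpow]. non_commutative_ring.
Qed.

Lemma Cmod_ge0 c : 0 <= Cmod c.
Proof. unfold Cmod. apply sqrt_pos. Qed.

Lemma qnil_sum (u v : A) mu : Cmod mu <= 1 -> bmul u v = bscal mu (bmul v u) ->
  qnil u -> qnil v -> qnil (badd u v).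
Proof.
  intros Hmu Huv Hu Hv. apply bound_qnil. intros e He.
  destruct (qnil_bound u Hu (e / 2)) as [K1 [HK1 HK1n]]; [lra|].
  destruct (qnil_bound v Hv (e / 2)) as [K2 [HK2 HK2n]]; [lra|].
  exists (K1 * K2). split; [apply Rmult_lt_0_compat; lra|]. intros n.
  destruct (decomp u v mu Huv n) as [l [Hlen [Hin Heq]]].
  rewrite Heq.
  assert (Hpos : 0 <= K1 * K2 * (e / 2) ^ n) by (apply Rmult_le_pos; [apply Rmult_le_pos; lra| apply pow_le; lra]).
  eapply Rle_trans; [apply (sumL_norm _ (K1 * K2 * (e / 2) ^ n)); [exact Hpos|]|].
  - intros [[k i] j] Ht. specialize (Hin _ Ht). simpl in Hin. simpl term.
    rewrite siter_norm.
    assert (Hk : Cmod mu ^ k <= 1).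
    { rewrite <- (pow1 k). apply pow_incr. split; [apply Cmod_ge0| exact Hmu]. }
    assert (Hm : bnorm (bmul (bpow v i) (bpow u j)) <= K1 * K2 * (e / 2) ^ n).
    { eapply Rle_trans; [apply (bnorm_mul A)|].
      subst n. rewrite pow_add.
      specialize (HK1n j). specialize (HK2n i).
      pose proof (bnorm_ge0 A (bpow v i)). pose proof (bnorm_ge0 A (bpow u j)).
      replace (K1 * K2 * ((e / 2) ^ i * (e / 2) ^ j)) with ((K2 * (e/2)^i) * (K1 * (e/2)^j)) by ring.
      apply Rmult_le_compat; assumption. }
    pose proof (Cmod_ge0 mu). pose proof (pow_le (Cmod mu) k ltac:(assumption)).
    pose proof (bnorm_ge0 A (bmul (bpow v i) (bpow u j))).
    nra.
  - rewrite Hlen, pow_INR. simpl (INR 2).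
    replace (1 + 1) with 2 by ring. replace (e ^ n) with ((2 * (e / 2)) ^ n) by (f_equal; field). rewrite Rpow_mult_distr. apply Req_le. ring.
Qed.

Lemma Cmod_pos z : z <> C0 -> 0 < Cmod z.
Proof.
  intros Hz. unfold Cmod. apply sqrt_lt_R0. destruct z as [x y]. cbn [Re Im].
  destruct (Req_dec x 0) as [->|Hx].
  - destruct (Req_dec y 0) as [->|Hy]. + exfalso; apply Hz; reflexivity. + nra.
  - nra.
Qed.

Lemma norm3 (p x q : A) : bnorm (bmul (bmul p x) q) <= bnorm p * bnorm x * bnorm q.
Proof.
  eapply Rle_trans; [apply (bnorm_mul A)|]. apply Rmult_le_compat_r; [apply (bnorm_ge0 A)|].
  apply (bnorm_mul A).
Qed.

Lemma kill_left (c : Cplx) (w x v : A) : c <> C0 -> qnil v ->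
  bscal c x = bmul (bmul w x) v -> x = bzero.
Proof.
  intros Hc Hv H. apply (kill (Cmod c) (bnorm w) v x (Cmod_pos c Hc) (bnorm_ge0 A w) Hv).
  intros n. rewrite <- siter_norm, (iter_eq c w x v H).
  eapply Rle_trans; [apply norm3|].
  pose proof (bnorm_pow w n). pose proof (bnorm_ge0 A x). pose proof (bnorm_ge0 A (bpow v (S n))).
  pose proof (bnorm_ge0 A (bpow w (S n))).
  replace (bnorm w ^ S n * bnorm (bpow v (S n)) * bnorm x) with (bnorm w ^ S n * bnorm x * bnorm (bpow v (S n))) by ring.
  apply Rmult_le_compat_r; [assumption|]. apply Rmult_le_compat_r; assumption.
Qed.

Lemma kill_right (c : Cplx) (w x v : A) : c <> C0 -> qnil w ->
  bscal c x = bmul (bmul w x) v -> x = bzero.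
Proof.
  intros Hc Hw H. apply (kill (Cmod c) (bnorm v) w x (Cmod_pos c Hc) (bnorm_ge0 A v) Hw).
  intros n. rewrite <- siter_norm, (iter_eq c w x v H).
  eapply Rle_trans; [apply norm3|].
  pose proof (bnorm_pow v n). pose proof (bnorm_ge0 A x). pose proof (bnorm_ge0 A (bpow v (S n))).
  pose proof (bnorm_ge0 A (bpow w (S n))).
  replace (bnorm v ^ S n * bnorm (bpow w (S n)) * bnorm x) with (bnorm (bpow w (S n)) * bnorm x * bnorm v ^ S n) by ring.
  apply Rmult_le_compat_l; [|assumption]. apply Rmult_le_pos; assumption.
Qed.

Lemma bseries_zero (f : nat -> A) : (forall n, f n = bzero) -> bseries f bzero.
Proof.
  intros H. unfold bseries, bconv. intros eps Heps. exists O. intros n _.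
  assert (Hp : bpartial f n = bzero).
  { induction n; simpl. apply H. rewrite IHn, H. non_commutative_ring. }
  rewrite Hp. replace (bsub (@bzero A) bzero) with (@bzero A) by non_commutative_ring.
  rewrite bnorm0. exact Heps.
Qed.
End Gen.

Definition Cinv (z : Cplx) : Cplx :=
  mkC (Re z / (Re z ^ 2 + Im z ^ 2)) (- Im z / (Re z ^ 2 + Im z ^ 2)).

Lemma n2_pos z : z <> C0 -> 0 < Re z ^ 2 + Im z ^ 2.
Proof.
  intros Hz. destruct z as [x y]. cbn [Re Im].
  destruct (Req_dec x 0) as [->|Hx].
  - destruct (Req_dec y 0) as [->|Hy]. + exfalso; apply Hz; reflexivity. + nra.
  - nra.
Qed.

Lemma Cinv_l z : z <> C0 -> Cmul (Cinv z) z = Defs.C1.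
Proof.
  intros Hz. pose proof (n2_pos z Hz) as Hn. destruct z as [x y]. cbn [Re Im] in *.
  unfold Cmul, Cinv, Defs.C1. cbn [Re Im]. f_equal; field; lra.
Qed.

Lemma Cmod_inv z : z <> C0 -> 1 < Cmod z -> Cmod (Cinv z) <= 1.
Proof.
  intros Hz H1. pose proof (n2_pos z Hz) as Hn. unfold Cmod in *. destruct z as [x y]. cbn [Re Im] in *.
  assert (Hg : 1 < x ^ 2 + y ^ 2).
  { destruct (Rle_dec (x ^ 2 + y ^ 2) 1) as [Hle|]; [|lra].
    pose proof (sqrt_le_1_alt _ _ Hle). rewrite sqrt_1 in H. lra. }
  unfold Cinv. cbn [Re Im].
  replace ((x / (x ^ 2 + y ^ 2)) ^ 2 + (- y / (x ^ 2 + y ^ 2)) ^ 2) with (/ (x ^ 2 + y ^ 2)) by (field; lra).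
  rewrite <- sqrt_1. apply sqrt_le_1_alt.
  rewrite <- Rinv_1. apply Rinv_le_contravar; lra.
Qed.

Theorem theorem2p4 (A : CBanachAlgebra) (lam : Cplx) (a b ad bd : A) :
  lam <> C0 ->
  is_gdrazin a ad ->
  is_gdrazin b bd ->
  bmul a b = bscal lam (bmul (bmul (bmul (spi a ad) b) a) (spi b bd)) ->
  exists (S1 S2 S3 S4 : A) (T : nat -> A),
    bseries (fun n => bmul (bmul (bmul (bpow bd (n + 2)) a) (bpow (badd a b) n)) (spi a ad)) S1 /\
    bseries (fun n => bmul (bmul (bpow (badd a b) n) b) (bpow ad (n + 2))) S2 /\
    (forall n, bseries (fun k => bmul (bmul (bmul (bmul (bpow bd (k + 1)) a)
                                   (bpow (badd a b) (n + k))) b) (bpow ad (n + 2))) (T n)) /\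
    bseries T S3 /\
    bseries (fun n => bmul (bmul (bmul (bmul (bpow bd (n + 2)) a) (bpow (badd a b) n)) b) ad) S4 /\
    is_gdrazin (badd a b)
      (bsub (bsub (badd (badd (badd (bmul (spi b bd) ad) (bmul bd (spi a ad))) S1)
                        (bmul (spi b bd) S2))
                  S3)
            S4).
Proof.
  intros Hl [Ha1 [Ha2 Ha3]] [Hb1 [Hb2 Hb3]] H.
  unfold bcomm in Ha1, Hb1.
  assert (Ea : ad = bmul (bmul ad ad) a).
  { transitivity (bmul ad (bmul a ad)); [exact Ha2|]. rewrite Ha1. non_commutative_ring. }
  assert (Ea' : ad = bmul a (bmul ad ad)).
  { transitivity (bmul ad (bmul a ad)); [exact Ha2|].
    transitivity (bmul (bmul ad a) ad); [non_commutative_ring|]. rewrite <- Ha1. non_commutative_ring. }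
  assert (Eb : bd = bmul (bmul bd bd) b).
  { transitivity (bmul bd (bmul b bd)); [exact Hb2|]. rewrite Hb1. non_commutative_ring. }
  assert (Eb' : bd = bmul b (bmul bd bd)).
  { transitivity (bmul bd (bmul b bd)); [exact Hb2|].
    transitivity (bmul (bmul bd b) bd); [non_commutative_ring|]. rewrite <- Hb1. non_commutative_ring. }
  assert (Fadp : bmul ad (spi a ad) = bzero).
  { unfold spi. transitivity (bsub ad (bmul ad (bmul a ad))); [non_commutative_ring|].
    rewrite <- Ha2. non_commutative_ring. }
  assert (Fqbd : bmul (spi b bd) bd = bzero).
  { unfold spi. transitivity (bsub bd (bmul b (bmul bd bd))); [non_commutative_ring|].
    rewrite <- Eb'. non_commutative_ring. }
  assert (F1 : bmul ad b = bzero).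
  { transitivity (bmul (bmul (bmul ad ad) a) b); [rewrite <- Ea; reflexivity|].
    transitivity (bmul (bmul ad ad) (bmul a b)); [non_commutative_ring|].
    rewrite H, <- (bscal_mulr A).
    transitivity (bscal lam (bmul ad (bmul (bmul ad (spi a ad)) (bmul (bmul b a) (spi b bd))))).
    { f_equal. non_commutative_ring. }
    rewrite Fadp. transitivity (bscal lam (@bzero A)); [f_equal; non_commutative_ring| apply scal0]. }
  assert (F2 : bmul a bd = bzero).
  { transitivity (bmul a (bmul b (bmul bd bd))); [rewrite <- Eb'; reflexivity|].
    transitivity (bmul (bmul a b) (bmul bd bd)); [non_commutative_ring|].
    rewrite H, <- (bscal_mull A).
    transitivity (bscal lam (bmul (bmul (bmul (spi a ad) b) a) (bmul (bmul (spi b bd) bd) bd))).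
    { f_equal. non_commutative_ring. }
    rewrite Fqbd. transitivity (bscal lam (@bzero A)); [f_equal; non_commutative_ring| apply scal0]. }
  assert (pb : bmul (spi a ad) b = b).
  { unfold spi. transitivity (bsub b (bmul a (bmul ad b))); [non_commutative_ring|].
    rewrite F1. non_commutative_ring. }
  assert (aq : bmul a (spi b bd) = a).
  { unfold spi. transitivity (bsub a (bmul a (bmul b bd))); [non_commutative_ring|].
    rewrite Hb1. transitivity (bsub a (bmul (bmul a bd) b)); [non_commutative_ring|].
    rewrite F2. non_commutative_ring. }
  assert (Hab : bmul a b = bscal lam (bmul b a)).
  { rewrite H. f_equal.
    transitivity (bmul (bmul (spi a ad) b) (bmul a (spi b bd))); [non_commutative_ring|].
    rewrite pb, aq. reflexivity. }
  assert (bbbd : bmul (bmul b b) bd = bmul bd (bmul b b)).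
  { transitivity (bmul b (bmul b bd)); [non_commutative_ring|]. rewrite Hb1.
    transitivity (bmul (bmul b bd) b); [non_commutative_ring|]. rewrite Hb1. non_commutative_ring. }
  assert (F4 : bmul bd a = bzero).
  { apply (kill_left A lam bd (bmul bd a) (bsub b (bmul (bmul b b) bd)) Hl Hb3).
    transitivity (bscal lam (bmul (bmul bd bd) (bmul b a))).
    { f_equal. transitivity (bmul (bmul (bmul bd bd) b) a); [rewrite <- Eb; reflexivity| non_commutative_ring]. }
    rewrite (bscal_mulr A), <- Hab, bbbd.
    transitivity (bsub (bmul (bmul bd bd) (bmul a b)) (bmul (bmul bd bd) (bmul (bmul a bd) (bmul b b)))).
    - rewrite F2. non_commutative_ring.
    - non_commutative_ring. }
  assert (F3 : bmul b ad = bzero).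
  { apply (kill_right A lam (bsub a (bmul (bmul a a) ad)) (bmul b ad) ad Hl Ha3).
    transitivity (bscal lam (bmul (bmul b a) (bmul ad ad))).
    { f_equal. transitivity (bmul b (bmul a (bmul ad ad))); [rewrite <- Ea'; reflexivity| non_commutative_ring]. }
    rewrite (bscal_mull A), <- Hab.
    transitivity (bsub (bmul (bmul a b) (bmul ad ad)) (bmul (bmul a a) (bmul (bmul ad b) (bmul ad ad)))).
    - rewrite F1. non_commutative_ring.
    - non_commutative_ring. }
  assert (Zbdad : bmul bd ad = bzero).
  { transitivity (bmul (bmul (bmul bd bd) b) ad); [rewrite <- Eb; reflexivity|].
    transitivity (bmul (bmul bd bd) (bmul b ad)); [non_commutative_ring|]. rewrite F3. non_commutative_ring. }
  assert (Z5 : bmul a (bmul b bd) = bzero).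
  { rewrite Hb1. transitivity (bmul (bmul a bd) b); [non_commutative_ring|]. rewrite F2. non_commutative_ring. }
  assert (Z6 : bmul b (bmul a ad) = bzero).
  { rewrite Ha1. transitivity (bmul (bmul b ad) a); [non_commutative_ring|]. rewrite F3. non_commutative_ring. }
  assert (L1 : forall m, bmul (bpow bd (S m)) a = bzero).
  { intros m. rewrite bpow_succ_r. transitivity (bmul (bpow bd m) (bmul bd a)); [non_commutative_ring|].
    rewrite F4. non_commutative_ring. }
  assert (L2 : forall m, bmul b (bpow ad (S m)) = bzero).
  { intros m. cbn [bpow]. transitivity (bmul (bmul b ad) (bpow ad m)); [non_commutative_ring|].
    rewrite F3. non_commutative_ring. }
  exists bzero, bzero, bzero, bzero, (fun _ => bzero).
  split; [|split; [|split; [|split; [|split]]]].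
  - apply bseries_zero. intros n. replace (n + 2)%nat with (S (n + 1)) by lia.
    rewrite L1. non_commutative_ring.
  - apply bseries_zero. intros n. replace (n + 2)%nat with (S (n + 1)) by lia.
    transitivity (bmul (bpow (badd a b) n) (bmul b (bpow ad (S (n + 1))))); [non_commutative_ring|].
    rewrite L2. non_commutative_ring.
  - intros n. apply bseries_zero. intros k. replace (k + 1)%nat with (S k) by lia.
    rewrite L1. non_commutative_ring.
  - apply bseries_zero. intros n. reflexivity.
  - apply bseries_zero. intros n. replace (n + 2)%nat with (S (n + 1)) by lia.
    rewrite L1. non_commutative_ring.
  - assert (Hz : bsub (bsub (badd (badd (badd (bmul (spi b bd) ad) (bmul bd (spi a ad))) bzero)
                        (bmul (spi b bd) bzero)) bzero) bzero = badd ad bd).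
    { unfold spi.
      transitivity (badd (bsub ad (bmul b (bmul bd ad))) (bsub bd (bmul (bmul bd a) ad))); [non_commutative_ring|].
      rewrite Zbdad, F4. non_commutative_ring. }
    rewrite Hz. split; [|split].
    + unfold bcomm.
      transitivity (badd (badd (bmul a ad) (bmul a bd)) (badd (bmul b ad) (bmul b bd))); [non_commutative_ring|].
      rewrite F2, F3, Ha1, Hb1.
      transitivity (badd (badd (bmul ad a) (bmul ad b)) (badd (bmul bd a) (bmul bd b))); [|non_commutative_ring].
      rewrite F1, F4. non_commutative_ring.
    + transitivity (badd (badd (badd (bmul ad (bmul a ad)) (bmul ad (bmul a bd))) (badd (bmul (bmul ad b) ad) (bmul (bmul ad b) bd)))
                         (badd (badd (bmul (bmul bd a) ad) (bmul (bmul bd a) bd)) (badd (bmul bd (bmul b ad)) (bmul bd (bmul b bd))))).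
      2:{ non_commutative_ring. }
      rewrite F1, F2, F3, F4, <- Ha2, <- Hb2. non_commutative_ring.
    + set (u := bsub a (bmul (bmul a a) ad)). set (v := bsub b (bmul (bmul b b) bd)).
      assert (Hs : bsub (badd a b) (bmul (bmul (badd a b) (badd a b)) (badd ad bd)) = badd u v).
      { transitivity (bsub (badd u v) (badd (badd (bmul a (bmul a bd)) (bmul a (bmul b ad)))
                          (badd (badd (bmul a (bmul b bd)) (bmul b (bmul a ad))) (badd (bmul b (bmul a bd)) (bmul b (bmul b ad)))))).
        - unfold u, v. non_commutative_ring.
        - rewrite F2, F3, Z5, Z6. non_commutative_ring. }
      rewrite Hs.
      assert (Huv : bmul u v = bmul a b).
      { unfold u, v.
        transitivity (bsub (bsub (bmul a b) (bmul a (bmul (bmul b b) bd))) (bsub (bmul (bmul a a) (bmul ad b)) (bmul (bmul (bmul a a) (bmul ad b)) (bmul b bd)))).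
        - non_commutative_ring.
        - rewrite bbbd, F1.
          transitivity (bsub (bsub (bmul a b) (bmul (bmul a bd) (bmul b b))) (bsub (bmul (bmul a a) bzero) (bmul (bmul (bmul a a) bzero) (bmul b bd)))); [non_commutative_ring|].
          rewrite F2. non_commutative_ring. }
      assert (aaad : bmul (bmul a a) ad = bmul (bmul a ad) a).
      { transitivity (bmul a (bmul a ad)); [non_commutative_ring|]. rewrite Ha1 at 1. non_commutative_ring. }
      assert (Hvu : bmul v u = bmul b a).
      { unfold u, v.
        transitivity (bsub (bsub (bmul b a) (bmul b (bmul (bmul a a) ad))) (bsub (bmul (bmul b b) (bmul bd a)) (bmul (bmul (bmul b b) (bmul bd a)) (bmul a ad)))).
        - non_commutative_ring.
        - rewrite aaad, F4.
          transitivity (bsub (bsub (bmul b a) (bmul (bmul b (bmul a ad)) a)) (bsub (bmul (bmul b b) bzero) (bmul (bmul (bmul b b) bzero) (bmul a ad)))); [non_commutative_ring|].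
          rewrite Z6. non_commutative_ring. }
      assert (Huv' : bmul u v = bscal lam (bmul v u)) by (rewrite Huv, Hvu; exact Hab).
      destruct (Rle_dec (Cmod lam) 1) as [Hle|Hgt].
      * exact (qnil_sum A u v lam Hle Huv' Ha3 Hb3).
      * apply Rnot_le_lt in Hgt.
        rewrite (badd_comm A).
        apply (qnil_sum A v u (Cinv lam) (Cmod_inv lam Hl Hgt)); [|exact Hb3|exact Ha3].
        rewrite Huv', <- (bscal_mul A), (Cinv_l lam Hl), (bscal_1 A). reflexivity.
Qed.
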